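(* Fix $t\ge 0$. Let $\sigma=\{x_1,\dots,x_m\}\subseteq\mathcal C$ and $\tau=\{y_1,\dots,y_n\}\subseteq\mathcal Y^\circ$ be finite subsets, and set $A:=\max_i r_{\mathcal C}(x_i)$, $B:=\max_j r_{\mathcal Y}(y_j)$. Then $\sigma\cup\tau$ is a simplex of the intrinsic Čech complex $\check{C}_t(\mathcal X,d_\theta)$ if and only if at least one of the following holds: (C) there exists $z\in\mathcal C$ with $z\in\bigcap_{i=1}^m \overline{B}_{\mathcal C}(x_i,t)$ and $\|(r_{\mathcal C}(z),B)\|_{\ell^p}\le t$; (Y) there exists $w\in\mathcal Y$ with $w\in\bigcap_{j=1}^n \overline{B}_{\mathcal Y}(y_j,t)$ and $\|(A,r_{\mathcal Y}(w))\|_{\ell^p}\le t$.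
   Context: Let $A$ be a unital $C^*$-algebra, $H$ a Hilbert space, $\mathcal X=\mathrm{CB}(A,B(H))$, $\mathcal C=\mathrm{CP}(A,B(H))$ with Bures distance $\beta$. Fix $\theta\in\mathcal C$, $\lambda>0$, $\alpha\in(0,1]$, $p\in[1,\infty]$, and let $d_\theta=\beta^{BK}_{\theta,\lambda,p,\alpha}$ be the Bures--Kuratowski metric. Let $\mathcal Y=(\mathcal X\setminus\mathcal C)\sqcup\{\ast\}$ with metric $d_{\mathrm{reg}}$ ($=\lambda\delta_{\mathrm{reg}}^\alpha$ on non-CP pairs and $\lambda\delta_{\mathrm{reg}}(\cdot,0)^\alpha$ to $\ast$, $\delta_{\mathrm{reg}}$ the regular-representation metric), $\mathcal Y^\circ=\mathcal Y\setminus\{\ast\}$. Then $(\mathcal X,d_\theta)$ is the $\ell^p$ wedge of $(\mathcal C,\beta,\theta)$ and $(\mathcal Y,d_{\mathrm{reg}},\ast)$ with $\theta\sim\ast$: $d_\theta=\beta$ on $\mathcal C$, $d_\theta=d_{\mathrm{reg}}$ on $\mathcal Y$, and $d_\theta(x,y)=\|(r_{\mathcal C}(x),r_{\mathcal Y}(y))\|_{\ell^p}$ for $x\in\mathcal C$, $y\in\mathcal Y$, where $r_{\mathcal C}(x)=\beta(x,\theta)$, $r_{\mathcal Y}(y)=d_{\mathrm{reg}}(y,\ast)$. $\overline{B}_{\mathcal C}$, $\overline{B}_{\mathcal Y}$ are closed balls in $(\mathcal C,\beta)$, $(\mathcal Y,d_{\mathrm{reg}})$. The intrinsic Čech complex $\check{C}_t(Z,d)$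 of a metric space is the nerve of its closed radius-$t$ balls: a finite $\sigma\subseteq Z$ is a simplex iff $\bigcap_{z\in\sigma}\overline{B}_Z(z,t)\neq\varnothing$. *)

(* Defs.v *)
From Stdlib Require List.
From mathcomp Require Import all_boot all_order all_algebra.
From mathcomp Require Import all_classical all_reals all_analysis.
Set Implicit Arguments. Unset Strict Implicit. Unset Printing Implicit Defensive.
Import Order.TTheory GRing.Theory Num.Theory.
Local Open Scope ring_scope.

Definition is_metric (R : realType) (T : Type) (d : T -> T -> R) : Prop :=
  [/\ (forall x y, 0 <= d x y),
      (forall x y, d x y = 0 <-> x = y),
      (forall x y, d x y = d y x) &
      (forall x y z, d x z <= d x y + d y z)].

Definition lp2 (R : realType) (p : \bar R) (a b : R) : R :=
  match p with
  | EFin q => powR (powR `|a| q + powR `|b| q) q^-1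
  | _ => Num.max `|a| `|b|
  end.

(* The ell^p wedge of (C, dC, theta) and (Y, dY, star), where Y = option Yo,
   with None playing the role of the base point star, and Yo = Y minus star.
   The wedge carrier is C + Yo  (the base point star is identified with theta). *)
Definition wedge_dist (R : realType) (C Yo : Type) (dC : C -> C -> R)
  (dY : option Yo -> option Yo -> R) (theta : C) (p : \bar R)
  (u v : (C + Yo)%type) : R :=
  match u, v with
  | inl x, inl x' => dC x x'
  | inr y, inr y' => dY (Some y) (Some y')
  | inl x, inr y => lp2 p (dC x theta) (dY (Some y) None)
  | inr y, inl x => lp2 p (dC x theta) (dY (Some y) None)
  end.

Definition cball (R : realType) (Z : Type) (d : Z -> Z -> R) (x : Z) (t : R)
  : Z -> Prop := fun z => d x z <= t.

Definition cech_simplex (R : realType) (Z : Type) (d : Z -> Z -> R) (t : R)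
  (s : seq Z) : Prop :=
  exists z : Z, forall x, List.In x s -> cball d x t z.

(* Main.v *)
Require Import Defs.
From Stdlib Require List.
From mathcomp Require Import all_boot all_order all_algebra.
From mathcomp Require Import all_classical all_reals all_analysis.
Import Order.TTheory GRing.Theory Num.Theory.
Local Open Scope ring_scope.

Section L.
Variable R : realType.

Lemma lp2C (p : \bar R) a b : lp2 p a b = lp2 p b a.
Proof. by case: p => [q||] /=; rewrite ?(addrC (powR `|a| q)) // maxC. Qed.

Lemma lp2_mono (p : \bar R) a b b' : (1 <= p)%E -> `|b| <= `|b'| ->
  lp2 p a b <= lp2 p a b'.
Proof.
case: p => [q||] //= q1 bb; last by rewrite ge_max !le_max lexx bb !orbT.
have q0 : 0 <= q by rewrite lee_fin in q1; apply: le_trans q1.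
apply: ge0_ler_powR; rewrite ?invr_ge0 ?nnegrE ?addr_ge0 ?powR_ge0 //.
by rewrite lerD2l; apply: ge0_ler_powR; rewrite ?nnegrE.
Qed.

Lemma lp2_0 (p : \bar R) a : (1 <= p)%E -> lp2 p a 0 = `|a|.
Proof.
case: p => [q||] //= q1; last by rewrite normr0 max_l.
have q0 : 0 < q by rewrite lee_fin in q1; apply: lt_le_trans q1.
rewrite normr0 powR0 ?gt_eqF // addr0 -powRrM mulfV ?gt_eqF // powRr1 //.
Qed.

Lemma lp2_ge (p : \bar R) a b : (1 <= p)%E -> `|a| <= lp2 p a b.
Proof. by move=> p1; rewrite -{1}(@lp2_0 p a p1); apply: lp2_mono; rewrite // normr0. Qed.

Lemma bigmax_ge (T : Type) (f : T -> R) s x : List.In x s ->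
  f x <= \big[Num.max/0]_(y <- s) f y.
Proof.
elim: s => //= a s IH [->|/IH h]; rewrite big_cons le_max ?lexx //.
by rewrite h orbT.
Qed.

Lemma bigmax_ex (T : Type) (f : T -> R) s : s <> [::] -> (forall x, 0 <= f x) ->
  exists2 x, List.In x s & \big[Num.max/0]_(y <- s) f y = f x.
Proof.
move=> + f0; elim: s => //= a [|b s] IH _.
  by exists a; [left | rewrite big_cons big_nil max_l].
have [//|x xin ex] := IH.
rewrite big_cons ex; case: (leP (f a) (f x)) => h.
  by exists x; [right|].
by exists a; [left|].
Qed.
End L.
Theorem proposition6p24 (R : realType) (C Yo : Type)
  (dC : C -> C -> R) (dY : option Yo -> option Yo -> R) (theta : C)
  (p : \bar R) (t : R) (sigma : seq C) (tau : seq Yo) :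
  is_metric dC -> is_metric dY -> (1 <= p)%E -> 0 <= t ->
  sigma <> [::] -> tau <> [::] ->
  let rC := fun x : C => dC x theta in
  let rY := fun y : option Yo => dY y None in
  let A := \big[Num.max/0]_(x <- sigma) rC x in
  let B := \big[Num.max/0]_(y <- tau) rY (Some y) in
  cech_simplex (wedge_dist dC dY theta p) t
    (map inl sigma ++ map inr tau)
  <->
  ((exists z : C, (forall x, List.In x sigma -> cball dC x t z)
                  /\ lp2 p (rC z) B <= t)
   \/
   (exists w : option Yo, (forall y, List.In y tau -> cball dY (Some y) t w)
                  /\ lp2 p A (rY w) <= t)).
Proof.
move=> dCm dYm p1 t0 sne tne rC rY A B.
case: dCm => [dC0 dCe _ _]; case: dYm => [dY0 dYe _ _].
have Bge y : List.In y tau -> rY (Some y) <= B by apply: bigmax_ge.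
have Age x : List.In x sigma -> rC x <= A by apply: bigmax_ge.
have [yB yBin Be] : exists2 y, List.In y tau & B = rY (Some y).
  by apply: bigmax_ex => // y; apply: dY0.
have [xA xAin Ae] : exists2 x, List.In x sigma & A = rC x.
  by apply: bigmax_ex => // x; apply: dC0.
have inL x : List.In x sigma -> List.In (inl x) (map inl sigma ++ map inr tau).
  by move=> h; apply: List.in_or_app; left; apply: List.in_map.
have inR y : List.In y tau -> List.In (inr y) (map inl sigma ++ map inr tau).
  by move=> h; apply: List.in_or_app; right; apply: List.in_map.
split.
- case=> [[z|y0] H].
  + left; exists z; split.
      by move=> x xin; apply: (H (inl x)); apply: inL.
    by rewrite Be; apply: (H (inr yB)); apply: inR.
  + right; exists (Some y0); split.
      by move=> y yin; apply: (H (inr y)); apply: inR.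
    by rewrite Ae; apply: (H (inl xA)); apply: inL.
- case=> [[z [Hz Hl]] | [w [Hw Hl]]].
  + exists (inl z) => u /List.in_app_iff
      [/List.in_map_iff [x [<- xin]] | /List.in_map_iff [y [<- yin]]];
      rewrite /cball /=; first exact: Hz.
    apply: le_trans Hl; apply: lp2_mono => //.
    rewrite !ger0_norm ?Bge // Be; exact: dY0.
  + case: w Hw Hl => [y0|] Hw Hl.
    * exists (inr y0) => u /List.in_app_iff
        [/List.in_map_iff [x [<- xin]] | /List.in_map_iff [y [<- yin]]];
        rewrite /cball /=; last exact: Hw.
      apply: le_trans Hl; rewrite lp2C [X in _ <= X]lp2C; apply: lp2_mono => //.
      rewrite !ger0_norm ?Age // Ae; exact: dC0.
    * have rY0 : rY None = 0 by apply/dYe.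
      have dtt : dC theta theta = 0 by apply/dCe.
      rewrite rY0 lp2_0 // in Hl.
      exists (inl theta) => u /List.in_app_iff
        [/List.in_map_iff [x [<- xin]] | /List.in_map_iff [y [<- yin]]];
        rewrite /cball /=.
        by apply: le_trans Hl; apply: le_trans (Age x xin) _; apply: ler_norm.
      rewrite dtt lp2C lp2_0 // ger0_norm //; exact: Hw.
Qed.
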